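(* With $F_1=1+5x-8x^2+x^3$, $G_0=1-x+x^2$, $G_1=1-235x+1430x^2-1695x^3+270x^4+229x^5+x^6$ and $\Phi_3(x)=\dfrac{1728x(x-1)F_1^7}{G_0^3G_1^3}$, in a neighborhood of $x=0$ (radical factors equal to $1$ at $x=0$): $${}_3F_2\!\left(-\tfrac1{14},\tfrac{11}{42},\tfrac{25}{42};\tfrac47,\tfrac57;\Phi_3\right)=(1-3x)(1-x)^{3/7}G_0^{-3/14}G_1^{-3/14},$$ $${}_3F_2\!\left(\tfrac3{14},\tfrac{23}{42},\tfrac{37}{42};\tfrac67,\tfrac97;\Phi_3\right)=\left(1-\tfrac{2x}{3}\right)(1-x)^{-2/7}F_1^{-2}G_0^{9/14}G_1^{9/14},$$ $${}_3F_2\!\left(\tfrac5{14},\tfrac{29}{42},\tfrac{43}{42};\tfrac87,\tfrac{10}7;\Phi_3\right)=\left(1+\tfrac{x}{2}\right)(1-x)^{-1/7}F_1^{-3}G_0^{15/14}G_1^{15/14}.$$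
   Context: ${}_3F_2(\alpha_1,\alpha_2,\alpha_3;\beta_1,\beta_2;z)=\sum_{n\ge0}\frac{(\alpha_1)_n(\alpha_2)_n(\alpha_3)_n}{(\beta_1)_n(\beta_2)_n n!}z^n$. *)

(* Defs.v *)
From Stdlib Require Import Reals Arith.
Open Scope R_scope.

Fixpoint poch (a : R) (n : nat) : R :=
  match n with
  | O => 1
  | S m => poch a m * (a + INR m)
  end.

Definition coef3F2 (a1 a2 a3 b1 b2 : R) (n : nat) : R :=
  poch a1 n * poch a2 n * poch a3 n / (poch b1 n * poch b2 n * INR (Factorial.fact n)).

Definition is_3F2 (a1 a2 a3 b1 b2 z v : R) : Prop :=
  infinite_sum (fun n => coef3F2 a1 a2 a3 b1 b2 n * z ^ n) v.

Definition F1 (x : R) : R := 1 + 5*x - 8*x^2 + x^3.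
Definition G0 (x : R) : R := 1 - x + x^2.
Definition G1 (x : R) : R :=
  1 - 235*x + 1430*x^2 - 1695*x^3 + 270*x^4 + 229*x^5 + x^6.
Definition Phi3 (x : R) : R :=
  1728 * x * (x - 1) * F1 x ^ 7 / (G0 x ^ 3 * G1 x ^ 3).

(* Main.v *)
Require Import Defs.
From Stdlib Require Import Reals QArith Qreals Lra Lia List.
From Coquelicot Require Import Coquelicot.
Open Scope R_scope.

Lemma dconst (c x : R) : is_derive (fun _ : R => c) x 0.
Proof. exact (is_derive_const c x). Qed.
Lemma did (x : R) : is_derive (fun y : R => y) x 1.
Proof. exact (is_derive_id x). Qed.

Fixpoint peval (l : list Q) (x : R) : R :=
  match l with nil => 0 | a :: l' => Q2R a + x * peval l' x end.

Fixpoint padd (p q : list Q) : list Q :=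
  match p, q with
  | nil, _ => q
  | _, nil => p
  | a :: p', b :: q' => Qred (a + b)%Q :: padd p' q'
  end.
Definition pscal (c : Q) (p : list Q) : list Q := map (fun a => Qred (c * a)%Q) p.
Fixpoint pmul (p q : list Q) : list Q :=
  match p with
  | nil => nil
  | a :: p' => padd (pscal a q) (0%Q :: pmul p' q)
  end.
Definition psub p q := padd p (pscal (-1)%Q q).
Fixpoint pder (p : list Q) : list Q :=
  match p with nil => nil | _ :: p' => padd p' (0%Q :: pder p') end.
Fixpoint ppow (p : list Q) (n : nat) : list Q :=
  match n with O => (1%Q :: nil) | S m => pmul p (ppow p m) end.
Definition pzero (p : list Q) : bool := forallb (fun a => Qeq_bool a 0) p.

Lemma Q2R_Qred q : Q2R (Qred q) = Q2R q.
Proof. apply Qeq_eqR. apply Qred_correct. Qed.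

Lemma peval_add p q x : peval (padd p q) x = peval p x + peval q x.
Proof.
  revert q; induction p as [|a p IH]; intros [|b q]; cbn [peval padd]. all: try ring.
  idtac.
  all: rewrite IH, Q2R_Qred, Q2R_plus; ring.
Qed.

Lemma peval_scal c p x : peval (pscal c p) x = Q2R c * peval p x.
Proof.
  induction p as [|a p IH]; cbn [peval pmul pscal map]; try ring.
  unfold pscal in *; rewrite IH, Q2R_Qred, Q2R_mult; ring.
Qed.

Lemma peval_mul p q x : peval (pmul p q) x = peval p x * peval q x.
Proof.
  induction p as [|a p IH]; cbn [peval pmul pscal map]; try ring.
  rewrite peval_add, peval_scal; simpl; rewrite IH, RMicromega.Q2R_0; ring.
Qed.

Lemma peval_sub p q x : peval (psub p q) x = peval p x - peval q x.
Proof. unfold psub; rewrite peval_add, peval_scal.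
  replace (Q2R (-1)) with (-1) by (unfold Q2R; simpl; field). ring. Qed.

Lemma peval_pow p n x : peval (ppow p n) x = peval p x ^ n.
Proof. induction n; simpl. rewrite RMicromega.Q2R_1; ring. rewrite peval_mul, IHn; ring. Qed.

Lemma pzero_ok p x : pzero p = true -> peval p x = 0.
Proof.
  induction p as [|a p IH]; simpl; auto.
  intro H; apply andb_prop in H as [H1 H2].
  rewrite (RMicromega.Qeq_true _ _ H1), IH by auto. rewrite RMicromega.Q2R_0; ring.
Qed.

Lemma peval_der p x : is_derive (peval p) x (peval (pder p) x).
Proof.
  induction p as [|a p IH]; simpl.
  - exact (is_derive_const _ x).
  - rewrite peval_add; simpl. rewrite RMicromega.Q2R_0.
    apply (is_derive_ext (fun y => Q2R a + y * peval p y)). reflexivity.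
    replace (peval p x + (0 + x * peval (pder p) x)) with (0 + (1 * peval p x + x * peval (pder p) x)) by ring.
    apply (is_derive_plus (fun _ => Q2R a)). exact (is_derive_const _ x).
    apply (is_derive_mult (fun y => y) (peval p)). apply did. exact IH.
    intros; apply Rmult_comm.
Qed.
Import ListNotations.
Definition Xl : list Q := [0;1]%Q.
Definition F1l : list Q := [1;5;-8;1]%Q.
Definition G0l : list Q := [1;-1;1]%Q.
Definition G1l : list Q := [1;-235;1430;-1695;270;229;1]%Q.
Definition oml : list Q := [1;-1]%Q.
Definition Bl := pmul oml (pmul F1l (pmul G0l G1l)).
Definition Lnl := padd (psub Bl (pmul Xl (pmul F1l (pmul G0l G1l))))
  (padd (pscal 7 (pmul Xl (pmul (pder F1l) (pmul oml (pmul G0l G1l)))))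
   (padd (pscal (-3) (pmul Xl (pmul (pder G0l) (pmul oml (pmul F1l G1l)))))
         (pscal (-3) (pmul Xl (pmul (pder G1l) (pmul oml (pmul F1l G0l))))))).
Definition Hl (c0 cF c2 c3 : Q) :=
  padd (pscal (-c0) (pmul F1l (pmul G0l G1l)))
  (padd (pscal cF (pmul (pder F1l) (pmul oml (pmul G0l G1l))))
   (padd (pscal c2 (pmul (pder G0l) (pmul oml (pmul F1l G1l))))
         (pscal c3 (pmul (pder G1l) (pmul oml (pmul F1l G0l)))))).
Definition Wl := pmul (ppow G0l 3) (ppow G1l 3).
Definition phil := pscal 1728 (pmul Xl (pmul [-1;1]%Q (ppow F1l 7))).
Definition N2l P H := pmul Xl (padd (pmul (pder P) Bl) (pmul P H)).
Definition N3l N2 H := pmul Xl (padd (pmul (psub (pmul (pder N2) Lnl) (pmul N2 (pder Lnl))) Bl) (pmul N2 (pmul H Lnl))).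
Definition Zl (a1 a2 a3 b1 b2 : Q) P H :=
  let e1 := (b1 - 1 + (b2 - 1))%Q in let e2 := ((b1 - 1) * (b2 - 1))%Q in
  let q1 := (a1 + a2 + a3)%Q in let q2 := (a1*a2 + a1*a3 + a2*a3)%Q in let q3 := (a1*a2*a3)%Q in
  let N2 := N2l P H in let N3 := N3l N2 H in
  psub (pmul Xl (padd (pmul (psub (pmul (pder N3) Lnl) (pscal 3 (pmul N3 (pder Lnl)))) Bl) (pmul N3 (pmul H Lnl))))
   (padd (pscal q3 (pmul phil (pmul P (ppow Lnl 3))))
    (padd (pmul (psub (pscal q2 phil) (pscal e2 Wl)) (pmul N2 (ppow Lnl 2)))
          (pmul (psub (pscal q1 phil) (pscal e1 Wl)) N3))).
Lemma W_phi : pzero (psub (psub Wl phil) (ppow Lnl 2)) = true.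
Proof. vm_compute. reflexivity. Qed.
Lemma Z1 : pzero (Zl (-1#14) (11#42) (25#42) (4#7) (5#7) [1;-3]%Q (Hl (3#7) 0 (-3#14) (-3#14))) = true.
Proof. vm_compute. reflexivity. Qed.

Lemma poch_pos b n : 0 < b -> 0 < poch b n.
Proof. intro Hb. induction n; simpl. lra. apply Rmult_lt_0_compat; auto. pose proof (pos_INR n); lra. Qed.

Lemma fact_pos n : 0 < INR (Factorial.fact n).
Proof. apply lt_0_INR. apply Factorial.lt_O_fact. Qed.


Lemma c_rec a1 a2 a3 b1 b2 n : 0 < b1 -> 0 < b2 ->
  coef3F2 a1 a2 a3 b1 b2 (S n) * ((INR n + 1) * (b1 + INR n) * (b2 + INR n)) =
  coef3F2 a1 a2 a3 b1 b2 n * ((a1 + INR n) * (a2 + INR n) * (a3 + INR n)).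
Proof.
  intros H1 H2. unfold coef3F2. cbn [poch]. cbn [Factorial.fact].
  rewrite mult_INR, S_INR.
  pose proof (poch_pos b1 n H1). pose proof (poch_pos b2 n H2). pose proof (fact_pos n).
  pose proof (pos_INR n).
  field. repeat split; lra.
Qed.

Definition hypab (a1 a2 a3 b1 b2 : R) :=
  Rabs a1 <= 11/10 /\ Rabs a2 <= 11/10 /\ Rabs a3 <= 11/10 /\ 1/2 <= b1 /\ 1/2 <= b2.

Lemma c_bound a1 a2 a3 b1 b2 n : hypab a1 a2 a3 b1 b2 ->
  Rabs (coef3F2 a1 a2 a3 b1 b2 n) <= 8 ^ n.
Proof.
  intros (Ha1 & Ha2 & Ha3 & Hb1 & Hb2).
  induction n.
  - unfold coef3F2; simpl. rewrite Rabs_right; lra.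
  - pose proof (c_rec a1 a2 a3 b1 b2 n ltac:(lra) ltac:(lra)) as R.
    pose proof (pos_INR n) as Hn.
    set (c := coef3F2 a1 a2 a3 b1 b2 n) in *.
    set (c' := coef3F2 a1 a2 a3 b1 b2 (S n)) in *.
    assert (Hd : 0 < (INR n + 1) * (b1 + INR n) * (b2 + INR n)).
    { repeat apply Rmult_lt_0_compat; lra. }
    assert (Hx : Rabs ((a1 + INR n) * (a2 + INR n) * (a3 + INR n)) <= 8 * ((INR n + 1) * (b1 + INR n) * (b2 + INR n))).
    { rewrite !Rabs_mult.
      assert (Rabs (a1 + INR n) <= INR n + 11/10) by (eapply Rle_trans; [apply Rabs_triang|]; rewrite (Rabs_right (INR n)); lra).
      assert (Rabs (a2 + INR n) <= INR n + 11/10) by (eapply Rle_trans; [apply Rabs_triang|]; rewrite (Rabs_right (INR n)); lra).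
      assert (Rabs (a3 + INR n) <= INR n + 11/10) by (eapply Rle_trans; [apply Rabs_triang|]; rewrite (Rabs_right (INR n)); lra).
      pose proof (Rabs_pos (a1 + INR n)). pose proof (Rabs_pos (a2 + INR n)). pose proof (Rabs_pos (a3 + INR n)).
      apply Rle_trans with ((INR n + 11/10) * (INR n + 11/10) * (INR n + 11/10)).
      { apply Rmult_le_compat; try apply Rmult_le_pos; auto. apply Rmult_le_compat; auto. }
      apply Rle_trans with (8 * ((INR n + 1) * (INR n + 1/2) * (INR n + 1/2))).
      { nra. }
      apply Rmult_le_compat_l; [lra|]. apply Rmult_le_compat; try nra. }
    assert (Rabs c' * ((INR n + 1) * (b1 + INR n) * (b2 + INR n)) <= 8 ^ S n * ((INR n + 1) * (b1 + INR n) * (b2 + INR n))).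
    { rewrite <- (Rabs_right ((INR n + 1) * (b1 + INR n) * (b2 + INR n))) at 1 by lra.
      rewrite <- Rabs_mult, R, Rabs_mult. simpl.
      apply Rle_trans with (8 ^ n * (8 * ((INR n + 1) * (b1 + INR n) * (b2 + INR n)))).
      { apply Rmult_le_compat; auto using Rabs_pos. }
      right; ring. }
    apply Rmult_le_reg_r with (2 := H). exact Hd.
Qed.

Definition ak (a1 a2 a3 b1 b2 : R) (k : nat) (n : nat) : R := INR n ^ k * coef3F2 a1 a2 a3 b1 b2 n.
Definition Tk a1 a2 a3 b1 b2 k z := PSeries (ak a1 a2 a3 b1 b2 k) z.

Lemma ak_S a1 a2 a3 b1 b2 k n : ak a1 a2 a3 b1 b2 (S k) n = PS_incr_1 (PS_derive (ak a1 a2 a3 b1 b2 k)) n.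
Proof.
  unfold ak, PS_derive, PS_incr_1. destruct n. simpl. unfold zero; simpl; ring. simpl; ring.
Qed.

Lemma radius0 a1 a2 a3 b1 b2 : hypab a1 a2 a3 b1 b2 ->
  Rbar_le (Finite (1/16)) (CV_radius (coef3F2 a1 a2 a3 b1 b2)).
Proof.
  intro H. unfold CV_radius. destruct (Lub_Rbar_correct (CV_disk (coef3F2 a1 a2 a3 b1 b2))) as [Hub _].
  apply Hub. unfold CV_disk.
  apply (@ex_series_le R_AbsRing R_CompleteNormedModule _ (fun n => (1/2)^n)).
  - intro n. change norm with Rabs. rewrite Rabs_Rabsolu, Rabs_mult.
    rewrite (Rabs_right ((1/16)^n)) by (apply Rle_ge, pow_le; lra).
    apply Rle_trans with (8^n * (1/16)^n).
    + apply Rmult_le_compat_r. apply pow_le; lra. apply c_bound; auto.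
    + rewrite <- Rpow_mult_distr. right; f_equal; lra.
  - apply ex_series_geom. rewrite Rabs_right; lra.
Qed.

Lemma radiusk a1 a2 a3 b1 b2 k : hypab a1 a2 a3 b1 b2 ->
  Rbar_le (Finite (1/16)) (CV_radius (ak a1 a2 a3 b1 b2 k)).
Proof.
  intro H. induction k.
  - rewrite (CV_radius_ext _ (coef3F2 a1 a2 a3 b1 b2)). apply radius0; auto.
    intro n; unfold ak; simpl; ring.
  - rewrite (CV_radius_ext _ _ (ak_S a1 a2 a3 b1 b2 k)), CV_radius_incr_1, CV_radius_derive. auto.
Qed.

Lemma lt_rad a1 a2 a3 b1 b2 k z : hypab a1 a2 a3 b1 b2 -> Rabs z < 1/16 ->
  Rbar_lt (Rabs z) (CV_radius (ak a1 a2 a3 b1 b2 k)).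
Proof.
  intros H Hz. eapply Rbar_lt_le_trans; [|apply radiusk; auto]. simpl; auto.
Qed.

Lemma T_deriv a1 a2 a3 b1 b2 k z : hypab a1 a2 a3 b1 b2 -> Rabs z < 1/16 ->
  exists d, is_derive (Tk a1 a2 a3 b1 b2 k) z d /\ z * d = Tk a1 a2 a3 b1 b2 (S k) z.
Proof.
  intros H Hz. exists (PSeries (PS_derive (ak a1 a2 a3 b1 b2 k)) z). split.
  - apply is_derive_PSeries. apply lt_rad; auto.
  - unfold Tk. rewrite (PSeries_ext _ _ _ (ak_S a1 a2 a3 b1 b2 k)), PSeries_incr_1. reflexivity.
Qed.

Lemma exs (c z : R) (a : nat -> R) : ex_pseries a z -> ex_pseries (PS_scal c a) z.
Proof. intro H. apply ex_pseries_scal; auto. apply Rmult_comm. Qed.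

Ltac exps Ex := match goal with
  | |- ex_pseries (PS_plus _ _) _ => apply ex_pseries_plus; exps Ex
  | |- ex_pseries (PS_scal _ _) _ => apply exs; exps Ex
  | _ => exact (Ex _) end.

Lemma T_ode a1 a2 a3 b1 b2 z : hypab a1 a2 a3 b1 b2 -> Rabs z < 1/16 ->
  let e1 := b1 - 1 + (b2 - 1) in let e2 := (b1 - 1) * (b2 - 1) in
  let q1 := a1 + a2 + a3 in let q2 := a1*a2 + a1*a3 + a2*a3 in let q3 := a1*a2*a3 in
  let T := Tk a1 a2 a3 b1 b2 in
  (1 - z) * T 3%nat z = (z * q1 - e1) * T 2%nat z + (z * q2 - e2) * T 1%nat z + z * q3 * T 0%nat z.
Proof.
  intros H Hz e1 e2 q1 q2 q3 T.
  set (A := ak a1 a2 a3 b1 b2).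
  assert (Ex : forall k, ex_pseries (A k) z) by (intro k; apply CV_radius_inside, lt_rad; auto).
  assert (L : PSeries (PS_plus (A 3%nat) (PS_plus (PS_scal e1 (A 2%nat)) (PS_scal e2 (A 1%nat)))) z
     = T 3%nat z + e1 * T 2%nat z + e2 * T 1%nat z).
  { rewrite PSeries_plus, PSeries_plus, !PSeries_scal; auto.
    unfold T, Tk; fold A; rewrite !Rplus_assoc; reflexivity.
    all: exps Ex. }
  assert (R : PSeries (PS_plus (A 3%nat) (PS_plus (PS_scal q1 (A 2%nat)) (PS_plus (PS_scal q2 (A 1%nat)) (PS_scal q3 (A 0%nat))))) z
     = T 3%nat z + q1 * T 2%nat z + q2 * T 1%nat z + q3 * T 0%nat z).
  { rewrite !PSeries_plus, !PSeries_scal; auto.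
    unfold T, Tk; fold A; rewrite !Rplus_assoc; reflexivity.
    all: exps Ex. }
  assert (E : PSeries (PS_plus (A 3%nat) (PS_plus (PS_scal e1 (A 2%nat)) (PS_scal e2 (A 1%nat)))) z =
    z * PSeries (PS_plus (A 3%nat) (PS_plus (PS_scal q1 (A 2%nat)) (PS_plus (PS_scal q2 (A 1%nat)) (PS_scal q3 (A 0%nat))))) z).
  { rewrite <- PSeries_incr_1. apply PSeries_ext. intro n.
    unfold PS_plus, PS_scal, PS_incr_1, A, ak. change plus with Rplus. change scal with Rmult.
    destruct n as [|m]. { simpl. unfold zero; simpl. ring. }
    cbv beta.
    pose proof (c_rec a1 a2 a3 b1 b2 m) as Hr.
    destruct H as (_&_&_&Hb1&Hb2). specialize (Hr ltac:(lra) ltac:(lra)).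
    rewrite S_INR. unfold e1, e2, q1, q2, q3.
    transitivity (coef3F2 a1 a2 a3 b1 b2 (S m) * ((INR m + 1) * (b1 + INR m) * (b2 + INR m))). ring.
    rewrite Hr. ring. }
  rewrite L, R in E. clearbody T e1 e2 q1 q2 q3. lra.
Qed.

Ltac qnum := unfold Q2R; simpl; field.

Lemma F1_eq x : F1 x = peval F1l x.
Proof. unfold F1, F1l; cbn [peval]. unfold Q2R; simpl. field. Qed.
Lemma G0_eq x : G0 x = peval G0l x.
Proof. unfold G0, G0l; cbn [peval]. unfold Q2R; simpl. field. Qed.
Lemma G1_eq x : G1 x = peval G1l x.
Proof. unfold G1, G1l; cbn [peval]. unfold Q2R; simpl. field. Qed.
Lemma om_eq x : 1 - x = peval oml x.
Proof. unfold oml; cbn [peval]. unfold Q2R; simpl. field. Qed.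
Lemma X_eq x : x = peval Xl x.
Proof. unfold Xl; cbn [peval]. unfold Q2R; simpl. field. Qed.

Definition dF1 x := peval (pder F1l) x.
Definition dG0 x := peval (pder G0l) x.
Definition dG1 x := peval (pder G1l) x.

Lemma F1_der x : is_derive F1 x (dF1 x).
Proof. apply (is_derive_ext (peval F1l)). intro; symmetry; apply F1_eq. apply peval_der. Qed.
Lemma G0_der x : is_derive G0 x (dG0 x).
Proof. apply (is_derive_ext (peval G0l)). intro; symmetry; apply G0_eq. apply peval_der. Qed.
Lemma G1_der x : is_derive G1 x (dG1 x).
Proof. apply (is_derive_ext (peval G1l)). intro; symmetry; apply G1_eq. apply peval_der. Qed.

Lemma B_eq x : peval Bl x = (1 - x) * F1 x * G0 x * G1 x.
Proof. unfold Bl. rewrite !peval_mul, <- om_eq, <- F1_eq, <- G0_eq, <- G1_eq. ring. Qed.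

Lemma Ln_eq x : peval Lnl x = (1 - x) * F1 x * G0 x * G1 x - x * F1 x * G0 x * G1 x
  + 7 * x * dF1 x * (1 - x) * G0 x * G1 x - 3 * x * dG0 x * (1 - x) * F1 x * G1 x
  - 3 * x * dG1 x * (1 - x) * F1 x * G0 x.
Proof.
  unfold Lnl. rewrite !peval_add, peval_sub, !peval_scal, !peval_mul, B_eq.
  rewrite <- X_eq, <- om_eq, <- F1_eq, <- G0_eq, <- G1_eq. fold (dF1 x) (dG0 x) (dG1 x).
  replace (Q2R 7) with 7 by qnum. replace (Q2R (-3)) with (-3) by qnum. ring.
Qed.

Definition dPhi x :=
  1728 * ((2 * x - 1) * F1 x ^ 7 + x * (x - 1) * (7 * F1 x ^ 6 * dF1 x)) / (G0 x ^ 3 * G1 x ^ 3)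
  - 1728 * x * (x - 1) * F1 x ^ 7 * (3 * G0 x ^ 2 * dG0 x * G1 x ^ 3 + G0 x ^ 3 * (3 * G1 x ^ 2 * dG1 x)) / (G0 x ^ 3 * G1 x ^ 3) ^ 2.

Lemma deq (f : R -> R) (x l l' : R) : is_derive f x l -> l = l' -> is_derive f x l'.
Proof. intros H ->; exact H. Qed.

Lemma dmul (f g : R -> R) (x df dg : R) : is_derive f x df -> is_derive g x dg ->
  is_derive (fun y => f y * g y) x (df * g x + f x * dg).
Proof. intros; apply (is_derive_mult f g); auto. intros; apply Rmult_comm. Qed.
Lemma dplus (f g : R -> R) (x df dg : R) : is_derive f x df -> is_derive g x dg ->
  is_derive (fun y => f y + g y) x (df + dg).
Proof. intros; apply (is_derive_plus f g); auto. Qed.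
Lemma dminus (f g : R -> R) (x df dg : R) : is_derive f x df -> is_derive g x dg ->
  is_derive (fun y => f y - g y) x (df - dg).
Proof. intros; apply (is_derive_minus f g); auto. Qed.
Lemma ddiv (f g : R -> R) (x df dg : R) : is_derive f x df -> is_derive g x dg -> g x <> 0 ->
  is_derive (fun y => f y / g y) x ((df * g x - f x * dg) / g x ^ 2).
Proof. intros; apply (is_derive_div f g); auto. Qed.
Lemma dpow (f : R -> R) n (x df : R) : is_derive f x df ->
  is_derive (fun y => f y ^ n) x (INR n * f x ^ (pred n) * df).
Proof. intros. eapply deq. apply (is_derive_pow f n x df); auto. simpl; ring. Qed.
Lemma dext (f g : R -> R) (x l : R) : (forall y, f y = g y) -> is_derive f x l -> is_derive g x l.
Proof. intros; apply (is_derive_ext f g); auto. Qed.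
Lemma dcomp (f g : R -> R) (x df dg : R) : is_derive f (g x) df -> is_derive g x dg ->
  is_derive (fun y => f (g y)) x (dg * df).
Proof. intros; apply (is_derive_comp f g); auto. Qed.
Lemma dexp (f : R -> R) (x df : R) : is_derive f x df -> is_derive (fun y => exp (f y)) x (df * exp (f x)).
Proof. intros; apply (dcomp exp f); auto. apply is_derive_exp. Qed.
Lemma dln (f : R -> R) (x df : R) : is_derive f x df -> 0 < f x -> is_derive (fun y => ln (f y)) x (df * / f x).
Proof. intros; apply (dcomp ln f); auto. apply is_derive_ln; auto. Qed.
Lemma dscal (f : R -> R) (c x df : R) : is_derive f x df -> is_derive (fun y => c * f y) x (c * df).
Proof. intros; apply (is_derive_scal f); auto. Qed.

Lemma Phi_der x : G0 x <> 0 -> G1 x <> 0 -> is_derive Phi3 x (dPhi x).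
Proof.
  intros H0 H1. unfold Phi3.
  eapply deq.
  { apply ddiv.
    - apply (dmul (fun y => 1728 * y * (y - 1)) (fun y => F1 y ^ 7)).
      + apply (dext (fun y => 1728 * (y * (y - 1)))). intro; ring.
        apply (dscal (fun y => y * (y - 1))).
        apply (dmul (fun y => y) (fun y => y - 1)). apply did.
        apply (dminus (fun y => y) (fun _ => 1)). apply did. apply dconst.
      + apply (dpow F1 7 x (dF1 x)). apply F1_der.
    - apply (dmul (fun y => G0 y ^ 3) (fun y => G1 y ^ 3)).
      apply (dpow G0 3 x (dG0 x)). apply G0_der.
      apply (dpow G1 3 x (dG1 x)). apply G1_der.
    - apply Rmult_integral_contrapositive; split; apply pow_nonzero; auto. }
  unfold dPhi. cbn [Init.Nat.pred]. replace (INR 7) with 7 by (simpl; ring). replace (INR 3) with 3 by (simpl; ring). field. split; auto.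
Qed.

Lemma xdPhi x : 1 - x <> 0 -> F1 x <> 0 -> G0 x <> 0 -> G1 x <> 0 ->
  x * dPhi x = Phi3 x * (peval Lnl x / peval Bl x).
Proof.
  intros H H0 H1 H2. rewrite Ln_eq, B_eq. unfold dPhi, Phi3.
  field. repeat split; auto.
Qed.

Lemma W_phi_eval x : peval Wl x - peval phil x = peval Lnl x ^ 2.
Proof.
  pose proof (pzero_ok _ x W_phi) as Z. rewrite !peval_sub, peval_pow in Z. lra.
Qed.

Lemma Wl_eq x : peval Wl x = G0 x ^ 3 * G1 x ^ 3.
Proof. unfold Wl. rewrite peval_mul, !peval_pow, <- G0_eq, <- G1_eq. reflexivity. Qed.
Lemma phil_eq x : peval phil x = 1728 * x * (x - 1) * F1 x ^ 7.
Proof.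
  unfold phil. rewrite peval_scal, !peval_mul, peval_pow, <- X_eq, <- F1_eq.
  replace (Q2R 1728) with 1728 by qnum.
  replace (peval [(-1)%Q; 1%Q] x) with (x - 1) by (cbn [peval]; unfold Q2R; simpl; field). ring.
Qed.

Lemma one_minus_Phi x : G0 x <> 0 -> G1 x <> 0 ->
  1 - Phi3 x = peval Lnl x ^ 2 / (G0 x ^ 3 * G1 x ^ 3).
Proof.
  intros H0 H1. rewrite <- W_phi_eval, Wl_eq, phil_eq. unfold Phi3. field. split; auto.
Qed.

Definition Ef (c0 cF c2 c3 : Q) (x : R) : R :=
  exp (Q2R c0 * ln (1 - x) + Q2R cF * ln (F1 x) + Q2R c2 * ln (G0 x) + Q2R c3 * ln (G1 x)).

Lemma H_eq c0 cF c2 c3 x : peval (Hl c0 cF c2 c3) x =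
  - Q2R c0 * F1 x * G0 x * G1 x + Q2R cF * dF1 x * (1 - x) * G0 x * G1 x
  + Q2R c2 * dG0 x * (1 - x) * F1 x * G1 x + Q2R c3 * dG1 x * (1 - x) * F1 x * G0 x.
Proof.
  unfold Hl. rewrite !peval_add, !peval_scal, !peval_mul, <- om_eq, <- F1_eq, <- G0_eq, <- G1_eq.
  fold (dF1 x) (dG0 x) (dG1 x). rewrite Q2R_opp. ring.
Qed.

Lemma E_der c0 cF c2 c3 x : 0 < 1 - x -> 0 < F1 x -> 0 < G0 x -> 0 < G1 x ->
  is_derive (Ef c0 cF c2 c3) x (Ef c0 cF c2 c3 x * (peval (Hl c0 cF c2 c3) x / peval Bl x)).
Proof.
  intros H H0 H1 H2. unfold Ef. eapply deq.
  { apply dexp. apply dplus. apply dplus. apply dplus.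
    - apply dscal. apply dln; auto. apply (dminus (fun _ => 1) (fun y => y)). apply dconst. apply did.
    - apply dscal. apply dln; auto. apply F1_der.
    - apply dscal. apply dln; auto. apply G0_der.
    - apply dscal. apply dln; auto. apply G1_der. }
  rewrite H_eq, B_eq. field. repeat split; lra.
Qed.

Definition mm x := peval Lnl x / peval Bl x.

Definition V1f c0 cF c2 c3 (P : list Q) x := Ef c0 cF c2 c3 x * peval P x.
Definition V2f c0 cF c2 c3 (P : list Q) x :=
  Ef c0 cF c2 c3 x * (peval (N2l P (Hl c0 cF c2 c3)) x / peval Lnl x).
Definition V3f c0 cF c2 c3 (P : list Q) x :=
  Ef c0 cF c2 c3 x * (peval (N3l (N2l P (Hl c0 cF c2 c3)) (Hl c0 cF c2 c3)) x / peval Lnl x ^ 3).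

Definition rr0 (a1 a2 a3 b1 b2 : Q) x := mm x * (Phi3 x * (Q2R a1 * Q2R a2 * Q2R a3)) / (1 - Phi3 x).
Definition rr1 (a1 a2 a3 b1 b2 : Q) x :=
  mm x * (Phi3 x * (Q2R a1 * Q2R a2 + Q2R a1 * Q2R a3 + Q2R a2 * Q2R a3) - (Q2R b1 - 1) * (Q2R b2 - 1)) / (1 - Phi3 x).
Definition rr2 (a1 a2 a3 b1 b2 : Q) x :=
  mm x * (Phi3 x * (Q2R a1 + Q2R a2 + Q2R a3) - (Q2R b1 - 1 + (Q2R b2 - 1))) / (1 - Phi3 x).

Definition goodx x := 0 < 1 - x /\ 0 < F1 x /\ 0 < G0 x /\ 0 < G1 x /\ 0 < peval Lnl x.

Lemma N2_eq P H x : peval (N2l P H) x = x * (peval (pder P) x * peval Bl x + peval P x * peval H x).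
Proof. unfold N2l. rewrite peval_mul, peval_add, !peval_mul, <- X_eq. reflexivity. Qed.
Lemma N3_eq N2 H x : peval (N3l N2 H) x = x * ((peval (pder N2) x * peval Lnl x - peval N2 x * peval (pder Lnl) x) * peval Bl x
   + peval N2 x * (peval H x * peval Lnl x)).
Proof. unfold N3l. rewrite peval_mul, peval_add, !peval_mul, peval_sub, !peval_mul, <- X_eq. reflexivity. Qed.

Lemma Z_eval a1 a2 a3 b1 b2 P H x : pzero (Zl a1 a2 a3 b1 b2 P H) = true ->
  let N2 := N2l P H in let N3 := N3l N2 H in
  x * ((peval (pder N3) x * peval Lnl x - 3 * (peval N3 x * peval (pder Lnl) x)) * peval Bl x + peval N3 x * (peval H x * peval Lnl x))
  = (Q2R a1 * Q2R a2 * Q2R a3) * (peval phil x * (peval P x * peval Lnl x ^ 3))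
    + ((Q2R a1 * Q2R a2 + Q2R a1 * Q2R a3 + Q2R a2 * Q2R a3) * peval phil x - (Q2R b1 - 1) * (Q2R b2 - 1) * peval Wl x) * (peval N2 x * peval Lnl x ^ 2)
    + ((Q2R a1 + Q2R a2 + Q2R a3) * peval phil x - (Q2R b1 - 1 + (Q2R b2 - 1)) * peval Wl x) * peval N3 x.
Proof.
  intros HZ N2 N3. pose proof (pzero_ok _ x HZ) as Z. unfold Zl in Z. fold N2 N3 in Z.
  repeat (rewrite peval_add in Z || rewrite peval_sub in Z || rewrite peval_mul in Z || rewrite peval_scal in Z || rewrite peval_pow in Z).
  rewrite <- X_eq in Z.
  rewrite !Q2R_plus, !Q2R_mult, !Q2R_minus, RMicromega.Q2R_1 in Z.
  replace (Q2R 3) with 3 in Z by qnum. lra.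
Qed.

Lemma V_rel (a1 a2 a3 b1 b2 c0 cF c2 c3 : Q) (P : list Q) x :
  pzero (Zl a1 a2 a3 b1 b2 P (Hl c0 cF c2 c3)) = true -> goodx x ->
  exists D1 D2 D3 : R,
    is_derive (V1f c0 cF c2 c3 P) x D1 /\ is_derive (V2f c0 cF c2 c3 P) x D2 /\ is_derive (V3f c0 cF c2 c3 P) x D3 /\
    x * D1 = mm x * V2f c0 cF c2 c3 P x /\ x * D2 = mm x * V3f c0 cF c2 c3 P x /\
    x * D3 = rr0 a1 a2 a3 b1 b2 x * V1f c0 cF c2 c3 P x + rr1 a1 a2 a3 b1 b2 x * V2f c0 cF c2 c3 P x
             + rr2 a1 a2 a3 b1 b2 x * V3f c0 cF c2 c3 P x.
Proof.
  intros HZ (H1 & H2 & H3 & H4 & H5).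
  pose proof (E_der c0 cF c2 c3 x H1 H2 H3 H4) as DE.
  assert (HB : peval Bl x <> 0).
  { rewrite B_eq. assert (0 < (1-x)*F1 x*G0 x*G1 x) by (repeat apply Rmult_lt_0_compat; lra). lra. }
  assert (HL : peval Lnl x <> 0) by lra.
  eexists; eexists; eexists. split; [|split; [|split; [|split; [|split]]]].
  - unfold V1f. apply dmul. exact DE. apply peval_der.
  - unfold V2f. apply dmul. exact DE. apply ddiv. apply peval_der. apply peval_der. auto.
  - unfold V3f. apply dmul. exact DE. apply ddiv. apply peval_der. apply dpow. apply peval_der.
    apply pow_nonzero; auto.
  - unfold V2f, mm. cbv beta. rewrite N2_eq. field. split; auto.
  - unfold V3f, mm. cbv beta. rewrite N3_eq. cbn [Init.Nat.pred]. replace (INR 3) with 3 by (simpl; ring). field. split; auto.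
  - unfold V1f, V2f, V3f, rr0, rr1, rr2, mm. cbv beta.
    set (H := Hl c0 cF c2 c3) in *. set (N2 := N2l P H) in *. set (N3 := N3l N2 H) in *. set (E := Ef c0 cF c2 c3) in *.
    pose proof (Z_eval a1 a2 a3 b1 b2 P H x HZ) as Z. cbv zeta in Z. fold N2 in Z. fold N3 in Z.
    assert (G0x : G0 x <> 0) by lra. assert (G1x : G1 x <> 0) by lra.
    rewrite (one_minus_Phi x G0x G1x).
    assert (PhiE : Phi3 x = peval phil x / peval Wl x).
    { rewrite phil_eq, Wl_eq. unfold Phi3. reflexivity. }
    rewrite PhiE. rewrite <- Wl_eq.
    assert (HW : peval Wl x <> 0). { rewrite Wl_eq. apply Rmult_integral_contrapositive; split; apply pow_nonzero; auto. }
    replace (INR 3) with 3 by (simpl; ring). cbn [Init.Nat.pred].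
    transitivity (E x * (x * ((peval (pder N3) x * peval Lnl x - 3 * (peval N3 x * peval (pder Lnl) x)) * peval Bl x
       + peval N3 x * (peval H x * peval Lnl x))) / (peval Bl x * peval Lnl x ^ 4)).
    { field. split; auto. }
    rewrite Z. field. repeat split; auto.
Qed.

Definition Uf (a1 a2 a3 b1 b2 : Q) k x := Tk (Q2R a1) (Q2R a2) (Q2R a3) (Q2R b1) (Q2R b2) k (Phi3 x).

Lemma U_rel (a1 a2 a3 b1 b2 : Q) x :
  hypab (Q2R a1) (Q2R a2) (Q2R a3) (Q2R b1) (Q2R b2) -> goodx x -> Rabs (Phi3 x) < 1/16 ->
  exists D0 D1 D2 : R,
    is_derive (Uf a1 a2 a3 b1 b2 0) x D0 /\ is_derive (Uf a1 a2 a3 b1 b2 1) x D1 /\ is_derive (Uf a1 a2 a3 b1 b2 2) x D2 /\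
    x * D0 = mm x * Uf a1 a2 a3 b1 b2 1 x /\ x * D1 = mm x * Uf a1 a2 a3 b1 b2 2 x /\
    x * D2 = rr0 a1 a2 a3 b1 b2 x * Uf a1 a2 a3 b1 b2 0 x + rr1 a1 a2 a3 b1 b2 x * Uf a1 a2 a3 b1 b2 1 x
             + rr2 a1 a2 a3 b1 b2 x * Uf a1 a2 a3 b1 b2 2 x.
Proof.
  intros Hab (H1 & H2 & H3 & H4 & H5) Hz.
  assert (G0x : G0 x <> 0) by lra. assert (G1x : G1 x <> 0) by lra.
  pose proof (Phi_der x G0x G1x) as DP.
  pose proof (xdPhi x ltac:(lra) ltac:(lra) G0x G1x) as XP.
  destruct (T_deriv _ _ _ _ _ 0 _ Hab Hz) as [t0 [Dt0 Et0]].
  destruct (T_deriv _ _ _ _ _ 1 _ Hab Hz) as [t1 [Dt1 Et1]].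
  destruct (T_deriv _ _ _ _ _ 2 _ Hab Hz) as [t2 [Dt2 Et2]].
  pose proof (T_ode _ _ _ _ _ _ Hab Hz) as ODE. cbv zeta in ODE.
  exists (dPhi x * t0), (dPhi x * t1), (dPhi x * t2).
  assert (OM : 0 < 1 - Phi3 x).
  { rewrite (one_minus_Phi x G0x G1x). apply Rdiv_lt_0_compat. apply pow_lt; lra.
    apply Rmult_lt_0_compat; apply pow_lt; lra. }
  unfold Uf, mm, rr0, rr1, rr2. split; [|split; [|split; [|split; [|split]]]].
  - apply (dcomp (Tk _ _ _ _ _ 0) Phi3). exact Dt0. exact DP.
  - apply (dcomp (Tk _ _ _ _ _ 1) Phi3). exact Dt1. exact DP.
  - apply (dcomp (Tk _ _ _ _ _ 2) Phi3). exact Dt2. exact DP.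
  - rewrite <- Rmult_assoc, XP, <- Et0. ring.
  - rewrite <- Rmult_assoc, XP, <- Et1. ring.
  - rewrite <- Rmult_assoc, XP.
    replace (Phi3 x * (peval Lnl x / peval Bl x) * t2) with (peval Lnl x / peval Bl x * (Phi3 x * t2)) by ring.
    rewrite Et2.
    apply (Rmult_eq_reg_r (1 - Phi3 x)); [|lra].
    set (z := Phi3 x) in *. set (T := Tk (Q2R a1) (Q2R a2) (Q2R a3) (Q2R b1) (Q2R b2)) in *.
    transitivity (peval Lnl x / peval Bl x * ((1 - z) * T 3%nat z)). ring.
    rewrite ODE. unfold mm. assert (HB : peval Bl x <> 0) by (rewrite B_eq; assert (0 < (1-x)*F1 x*G0 x*G1 x) by (repeat apply Rmult_lt_0_compat; lra); lra). field. split; auto; lra.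
Qed.
From Stdlib Require Import Reals Lra.
From Coquelicot Require Import Coquelicot.
Open Scope R_scope.

Lemma U1 (V dV : R -> R) (delta C : R) :
  (forall x, 0 < x < delta -> is_derive V x (dV x)) ->
  (forall x, 0 < x < delta -> x * dV x <= V x) ->
  (forall x, 0 < x < delta -> 0 <= V x) ->
  (forall x, 0 < x < delta -> V x <= C * x ^ 2) ->
  forall x, 0 < x < delta -> V x = 0.
Proof.
  intros Hd Hle H0 HC x0 Hx0.
  assert (Mono : forall t, 0 < t < x0 -> V x0 / x0 <= V t / t).
  { intros t Ht.
    destruct (MVT_cor2 (fun y => V y / y) (fun y => (dV y * y - V y * 1) / y ^ 2) t x0) as [c [Hc Hct]].
    - lra.
    - intros c Hc. apply is_derive_Reals.
      apply (is_derive_div V (fun y => y)). apply Hd; lra. apply (is_derive_id (K := R_AbsRing)). lra.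
    - assert ((dV c * c - V c * 1) / c ^ 2 <= 0).
      { unfold Rdiv. apply Rmult_le_0_r. specialize (Hle c ltac:(lra)). lra.
        apply Rlt_le, Rinv_0_lt_compat. apply pow_lt; lra. }
      assert (V x0 / x0 - V t / t <= 0). { rewrite Hc. apply Rmult_le_0_r; lra. }
      lra. }
  assert (HV0 := H0 x0 Hx0).
  destruct (Rle_lt_or_eq_dec 0 (V x0) HV0) as [Hpos|]; [|auto].
  exfalso.
  assert (HCp : 0 < C).
  { specialize (HC x0 Hx0). destruct (Rle_or_lt C 0) as [Hc|Hc]; auto.
    assert (C * x0 ^ 2 <= 0). { apply Rmult_le_0_r; auto. apply pow_le; lra. } lra. }
  set (t := Rmin (x0 / 2) (V x0 / (2 * C * x0))).
  assert (Ht : 0 < t < x0).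
  { unfold t. split. apply Rmin_pos. lra. apply Rdiv_lt_0_compat; auto. apply Rmult_lt_0_compat; lra.
    eapply Rle_lt_trans. apply Rmin_l. lra. }
  specialize (Mono t Ht). specialize (HC t ltac:(lra)).
  assert (V t / t <= C * t).
  { apply (Rmult_le_reg_r t). lra. unfold Rdiv. rewrite Rmult_assoc, Rinv_l by lra. simpl in HC. nra. }
  assert (C * t <= V x0 / (2 * x0)).
  { unfold t. apply Rle_trans with (C * (V x0 / (2 * C * x0))).
    apply Rmult_le_compat_l. lra. apply Rmin_r. right. field. lra. }
  assert (V x0 / (2 * x0) < V x0 / x0).
  { unfold Rdiv. apply Rmult_lt_compat_l; auto. apply Rinv_lt_contravar; nra. }
  lra.
Qed.
From Stdlib Require Import Reals Lra.
Open Scope R_scope.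

Lemma abs_prod_le (a b A B : R) : Rabs a <= A -> Rabs b <= B -> Rabs (a * b) <= A * B.
Proof. intros. rewrite Rabs_mult. apply Rmult_le_compat; auto using Rabs_pos. Qed.

Lemma sum_sq_bound (y0 y1 y2 w0 w1 w2 K : R) :
  Rabs w0 <= K * (Rabs y0 + Rabs y1 + Rabs y2) ->
  Rabs w1 <= K * (Rabs y0 + Rabs y1 + Rabs y2) ->
  Rabs w2 <= K * (Rabs y0 + Rabs y1 + Rabs y2) ->
  0 <= K ->
  y0 * w0 + y1 * w1 + y2 * w2 <= 3 * K * (y0^2 + y1^2 + y2^2).
Proof.
  intros H0 H1 H2 HK.
  set (S := Rabs y0 + Rabs y1 + Rabs y2).
  assert (y0 * w0 <= Rabs y0 * (K * S)).
  { eapply Rle_trans. apply Rle_abs. rewrite Rabs_mult. apply Rmult_le_compat_l; auto using Rabs_pos. }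
  assert (y1 * w1 <= Rabs y1 * (K * S)).
  { eapply Rle_trans. apply Rle_abs. rewrite Rabs_mult. apply Rmult_le_compat_l; auto using Rabs_pos. }
  assert (y2 * w2 <= Rabs y2 * (K * S)).
  { eapply Rle_trans. apply Rle_abs. rewrite Rabs_mult. apply Rmult_le_compat_l; auto using Rabs_pos. }
  assert (S * S <= 3 * (y0^2 + y1^2 + y2^2)).
  { unfold S. pose proof (Rabs_pos y0); pose proof (Rabs_pos y1); pose proof (Rabs_pos y2).
    assert (Q0 : y0^2 = Rabs y0 * Rabs y0) by (rewrite <- Rabs_mult; rewrite Rabs_right; [ring| nra]).
    assert (Q1 : y1^2 = Rabs y1 * Rabs y1) by (rewrite <- Rabs_mult; rewrite Rabs_right; [ring| nra]).
    assert (Q2 : y2^2 = Rabs y2 * Rabs y2) by (rewrite <- Rabs_mult; rewrite Rabs_right; [ring| nra]).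
    rewrite Q0, Q1, Q2.
    pose proof (Rle_0_sqr (Rabs y0 - Rabs y1)). pose proof (Rle_0_sqr (Rabs y1 - Rabs y2)).
    pose proof (Rle_0_sqr (Rabs y0 - Rabs y2)). unfold Rsqr in *. nra. }
  assert (K * (S * S) <= K * (3 * (y0^2 + y1^2 + y2^2))) by (apply Rmult_le_compat_l; auto).
  assert (Rabs y0 * (K*S) + Rabs y1*(K*S) + Rabs y2*(K*S) = K*(S*S)) by (unfold S; ring).
  lra.
Qed.

Lemma quad (be1 be2 d0 d1 d2 m r0 r1 r2 eta : R) :
  -3/7 <= be1 -> -3/7 <= be2 -> Rabs be1 <= 1 -> Rabs be2 <= 1 ->
  1/7 <= Rabs (be2 - be1) -> 1/25 <= Rabs (be1 * be2) ->
  0 <= eta -> eta <= 1/200000 ->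
  Rabs (m - 1) <= eta -> Rabs r0 <= eta ->
  Rabs (r1 + be1 * be2) <= eta -> Rabs (r2 + (be1 + be2)) <= eta ->
  let e1 := be1 + be2 in let e2 := be1 * be2 in
  let y0 := e2 * d0 + e1 * d1 + d2 in
  let y1 := be2 * d1 + d2 in
  let y2 := be1 * d1 + d2 in
  2 * (y0 * (e2 * (m * d1) + e1 * (m * d2) + (r0 * d0 + r1 * d1 + r2 * d2))
     + y1 * (be2 * (m * d2) + (r0 * d0 + r1 * d1 + r2 * d2))
     + y2 * (be1 * (m * d2) + (r0 * d0 + r1 * d1 + r2 * d2)))
  <= y0^2 + y1^2 + y2^2.
Proof.
  intros Hb1 Hb2 Ha1 Ha2 Hg He Heta0 Heta Hm Hr0 Hr1 Hr2 e1 e2 y0 y1 y2.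
  set (mu := m - 1). set (rho1 := r1 + e2). set (rho2 := r2 + e1).
  set (w0 := e2 * mu * d1 + e1 * mu * d2 + r0 * d0 + rho1 * d1 + rho2 * d2).
  set (w1 := be2 * mu * d2 + r0 * d0 + rho1 * d1 + rho2 * d2).
  set (w2 := be1 * mu * d2 + r0 * d0 + rho1 * d1 + rho2 * d2).
  assert (E : 2 * (y0 * (e2 * (m * d1) + e1 * (m * d2) + (r0 * d0 + r1 * d1 + r2 * d2))
     + y1 * (be2 * (m * d2) + (r0 * d0 + r1 * d1 + r2 * d2))
     + y2 * (be1 * (m * d2) + (r0 * d0 + r1 * d1 + r2 * d2)))
     = - 2 * be1 * y1 ^ 2 - 2 * be2 * y2 ^ 2 + 2 * (y0 * w0 + y1 * w1 + y2 * w2)).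
  { unfold w0, w1, w2, mu, rho1, rho2, y0, y1, y2, e1, e2. ring. }
  rewrite E. clear E.
  assert (De1 : e1 = be1 + be2) by reflexivity. assert (De2 : e2 = be1 * be2) by reflexivity.
  assert (Dy0 : y0 = e2 * d0 + e1 * d1 + d2) by reflexivity.
  assert (Dy1 : y1 = be2 * d1 + d2) by reflexivity. assert (Dy2 : y2 = be1 * d1 + d2) by reflexivity.
  assert (Dw0 : w0 = e2 * mu * d1 + e1 * mu * d2 + r0 * d0 + rho1 * d1 + rho2 * d2) by reflexivity.
  assert (Dw1 : w1 = be2 * mu * d2 + r0 * d0 + rho1 * d1 + rho2 * d2) by reflexivity.
  assert (Dw2 : w2 = be1 * mu * d2 + r0 * d0 + rho1 * d1 + rho2 * d2) by reflexivity.
  assert (Hm' : Rabs mu <= eta) by exact Hm. assert (Hr1' : Rabs rho1 <= eta) by exact Hr1.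
  assert (Hr2' : Rabs rho2 <= eta) by exact Hr2.
  clearbody w0 w1 w2 y0 y1 y2 mu rho1 rho2 e1 e2. clear Hm Hr1 Hr2.
  rewrite <- De2 in He.
  assert (He1 : Rabs e1 <= 2).
  { rewrite De1. eapply Rle_trans. apply Rabs_triang. lra. }
  assert (He2 : Rabs e2 <= 1).
  { rewrite De2. rewrite Rabs_mult. replace 1 with (1*1) by ring. apply Rmult_le_compat; auto using Rabs_pos. }
  set (Sy := Rabs y0 + Rabs y1 + Rabs y2).
  assert (Hd1 : Rabs d1 <= 7 * Sy).
  { assert (Hy : y1 - y2 = (be2 - be1) * d1) by (rewrite Dy1, Dy2; ring).
    assert (Rabs (y1 - y2) <= Rabs y1 + Rabs y2).
    { unfold Rminus. eapply Rle_trans. apply Rabs_triang. rewrite Rabs_Ropp. lra. }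
    rewrite Hy, Rabs_mult in H.
    assert (Rabs d1 * (1/7) <= Rabs (be2 - be1) * Rabs d1).
    { rewrite Rmult_comm. apply Rmult_le_compat_r; auto using Rabs_pos. }
    unfold Sy. pose proof (Rabs_pos y0). lra. }
  assert (Hd2 : Rabs d2 <= 8 * Sy).
  { assert (Hy : d2 = y1 - be2 * d1) by (rewrite Dy1; ring).
    rewrite Hy. unfold Rminus. eapply Rle_trans. apply Rabs_triang. rewrite Rabs_Ropp, Rabs_mult.
    assert (Rabs be2 * Rabs d1 <= 1 * Rabs d1) by (apply Rmult_le_compat_r; auto using Rabs_pos).
    unfold Sy in *. pose proof (Rabs_pos y0). pose proof (Rabs_pos y2). lra. }
  assert (Hd0 : Rabs d0 <= 575 * Sy).
  { assert (Hy : e2 * d0 = y0 - e1 * d1 - d2) by (rewrite Dy0; ring).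
    assert (Rabs (y0 - e1 * d1 - d2) <= Rabs y0 + 2 * Rabs d1 + Rabs d2).
    { unfold Rminus. eapply Rle_trans. apply Rabs_triang. rewrite Rabs_Ropp.
      eapply Rle_trans. apply Rplus_le_compat_r. apply Rabs_triang. rewrite Rabs_Ropp, Rabs_mult.
      assert (Rabs e1 * Rabs d1 <= 2 * Rabs d1) by (apply Rmult_le_compat_r; auto using Rabs_pos). lra. }
    rewrite <- Hy, Rabs_mult in H.
    assert (Rabs d0 * (1/25) <= Rabs e2 * Rabs d0).
    { rewrite Rmult_comm. apply Rmult_le_compat_r; auto using Rabs_pos. }
    unfold Sy in *. pose proof (Rabs_pos y0). pose proof (Rabs_pos y1). pose proof (Rabs_pos y2). lra. }
  set (Sd := Rabs d0 + Rabs d1 + Rabs d2).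
  assert (HSd : Sd <= 590 * Sy) by (unfold Sd; lra).
  rename Hm' into Hmu, Hr1' into Hrho1, Hr2' into Hrho2.
  assert (common : Rabs (r0 * d0 + rho1 * d1 + rho2 * d2) <= eta * Sd).
  { eapply Rle_trans. apply Rabs_triang. eapply Rle_trans. apply Rplus_le_compat_r. apply Rabs_triang.
    pose proof (abs_prod_le _ _ _ _ Hr0 (Rle_refl (Rabs d0))).
    pose proof (abs_prod_le _ _ _ _ Hrho1 (Rle_refl (Rabs d1))).
    pose proof (abs_prod_le _ _ _ _ Hrho2 (Rle_refl (Rabs d2))).
    unfold Sd. lra. }
  assert (HSy : 0 <= Sy) by (unfold Sy; pose proof (Rabs_pos y0); pose proof (Rabs_pos y1); pose proof (Rabs_pos y2); lra).
  assert (Hw0 : Rabs w0 <= (3 * eta * 590) * Sy).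
  { rewrite Dw0. replace (e2 * mu * d1 + e1 * mu * d2 + r0 * d0 + rho1 * d1 + rho2 * d2)
      with (e2 * mu * d1 + e1 * mu * d2 + (r0 * d0 + rho1 * d1 + rho2 * d2)) by ring.
    eapply Rle_trans. apply Rabs_triang. eapply Rle_trans. apply Rplus_le_compat_r. apply Rabs_triang.
    assert (Rabs (e2 * mu * d1) <= 1 * eta * Rabs d1) by (apply abs_prod_le; [apply abs_prod_le|]; auto; lra).
    assert (Rabs (e1 * mu * d2) <= 2 * eta * Rabs d2) by (apply abs_prod_le; [apply abs_prod_le|]; auto; lra).
    assert (eta * Sd <= eta * (590 * Sy)) by (apply Rmult_le_compat_l; auto).
    assert (eta * Rabs d1 <= eta * Sd) by (apply Rmult_le_compat_l; auto; unfold Sd; pose proof (Rabs_pos d0); pose proof (Rabs_pos d2); lra).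
    assert (eta * Rabs d2 <= eta * Sd) by (apply Rmult_le_compat_l; auto; unfold Sd; pose proof (Rabs_pos d0); pose proof (Rabs_pos d1); lra).
    nra. }
  assert (Hw1 : Rabs w1 <= (3 * eta * 590) * Sy).
  { rewrite Dw1. replace (be2 * mu * d2 + r0 * d0 + rho1 * d1 + rho2 * d2)
      with (be2 * mu * d2 + (r0 * d0 + rho1 * d1 + rho2 * d2)) by ring.
    eapply Rle_trans. apply Rabs_triang.
    assert (Rabs (be2 * mu * d2) <= 1 * eta * Rabs d2) by (apply abs_prod_le; [apply abs_prod_le|]; auto; lra).
    assert (eta * Sd <= eta * (590 * Sy)) by (apply Rmult_le_compat_l; auto).
    assert (eta * Rabs d2 <= eta * Sd) by (apply Rmult_le_compat_l; auto; unfold Sd; pose proof (Rabs_pos d0); pose proof (Rabs_pos d1); lra).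
    nra. }
  assert (Hw2 : Rabs w2 <= (3 * eta * 590) * Sy).
  { rewrite Dw2. replace (be1 * mu * d2 + r0 * d0 + rho1 * d1 + rho2 * d2)
      with (be1 * mu * d2 + (r0 * d0 + rho1 * d1 + rho2 * d2)) by ring.
    eapply Rle_trans. apply Rabs_triang.
    assert (Rabs (be1 * mu * d2) <= 1 * eta * Rabs d2) by (apply abs_prod_le; [apply abs_prod_le|]; auto; lra).
    assert (eta * Sd <= eta * (590 * Sy)) by (apply Rmult_le_compat_l; auto).
    assert (eta * Rabs d2 <= eta * Sd) by (apply Rmult_le_compat_l; auto; unfold Sd; pose proof (Rabs_pos d0); pose proof (Rabs_pos d1); lra).
    nra. }
  pose proof (sum_sq_bound y0 y1 y2 w0 w1 w2 (3 * eta * 590) Hw0 Hw1 Hw2 ltac:(lra)).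
  assert (0 <= y0 ^ 2) by nra. assert (0 <= y1 ^ 2) by nra. assert (0 <= y2 ^ 2) by nra.
  assert (3 * (3 * eta * 590) <= 1/10) by lra.
  assert (3 * (3 * eta * 590) * (y0 ^ 2 + y1 ^ 2 + y2 ^ 2) <= 1/10 * (y0 ^ 2 + y1 ^ 2 + y2 ^ 2)) by (apply Rmult_le_compat_r; lra).
  nra.
Qed.
From Coquelicot Require Import Coquelicot.

Lemma dmul' (f g : R -> R) (x df dg : R) : is_derive f x df -> is_derive g x dg ->
  is_derive (fun y => f y * g y) x (df * g x + f x * dg).
Proof. intros; apply (is_derive_mult f g); auto. intros; apply Rmult_comm. Qed.
Lemma dplus' (f g : R -> R) (x df dg : R) : is_derive f x df -> is_derive g x dg ->
  is_derive (fun y => f y + g y) x (df + dg).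
Proof. intros; apply (is_derive_plus f g); auto. Qed.
Lemma dscal' (f : R -> R) (c x df : R) : is_derive f x df -> is_derive (fun y => c * f y) x (c * df).
Proof. intros; apply (is_derive_scal f); auto. Qed.

Lemma U3 (d0 d1 d2 m r0 r1 r2 : R -> R) (be1 be2 delta C eta : R) :
  -3/7 <= be1 -> -3/7 <= be2 -> Rabs be1 <= 1 -> Rabs be2 <= 1 ->
  1/7 <= Rabs (be2 - be1) -> 1/25 <= Rabs (be1 * be2) ->
  0 <= eta -> eta <= 1/200000 ->
  (forall x, 0 < x < delta -> exists D0 D1 D2 : R, is_derive d0 x D0 /\ is_derive d1 x D1 /\ is_derive d2 x D2 /\
      x * D0 = m x * d1 x /\ x * D1 = m x * d2 x /\ x * D2 = r0 x * d0 x + r1 x * d1 x + r2 x * d2 x) ->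
  (forall x, 0 < x < delta -> Rabs (m x - 1) <= eta /\ Rabs (r0 x) <= eta /\
      Rabs (r1 x + be1 * be2) <= eta /\ Rabs (r2 x + (be1 + be2)) <= eta) ->
  (forall x, 0 < x < delta -> Rabs (d0 x) <= C * x /\ Rabs (d1 x) <= C * x /\ Rabs (d2 x) <= C * x) ->
  forall x, 0 < x < delta -> d0 x = 0 /\ d1 x = 0 /\ d2 x = 0.
Proof.
  intros Hb1 Hb2 Ha1 Ha2 Hg He Heta0 Heta Hder Hclose Hsm.
  set (e1 := be1 + be2). set (e2 := be1 * be2).
  set (y0 := fun x => e2 * d0 x + e1 * d1 x + d2 x).
  set (y1 := fun x => be2 * d1 x + d2 x).
  set (y2 := fun x => be1 * d1 x + d2 x).
  set (V := fun x => y0 x * y0 x + y1 x * y1 x + y2 x * y2 x).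
  assert (HV : forall x, 0 < x < delta -> is_derive V x (Derive V x) /\ x * Derive V x <= V x).
  { intros x Hx. destruct (Hder x Hx) as (D0 & D1 & D2 & H0 & H1 & H2 & E0 & E1 & E2).
    assert (Hy0 : is_derive y0 x (e2 * D0 + e1 * D1 + D2)).
    { unfold y0. apply dplus'. apply dplus'. apply dscal'; auto. apply dscal'; auto. auto. }
    assert (Hy1 : is_derive y1 x (be2 * D1 + D2)).
    { unfold y1. apply dplus'. apply dscal'; auto. auto. }
    assert (Hy2 : is_derive y2 x (be1 * D1 + D2)).
    { unfold y2. apply dplus'. apply dscal'; auto. auto. }
    assert (DV : is_derive V x ((e2 * D0 + e1 * D1 + D2) * y0 x + y0 x * (e2 * D0 + e1 * D1 + D2)
        + ((be2 * D1 + D2) * y1 x + y1 x * (be2 * D1 + D2)) + ((be1 * D1 + D2) * y2 x + y2 x * (be1 * D1 + D2)))).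
    { unfold V. apply dplus'. apply dplus'. apply dmul'; auto. apply dmul'; auto. apply dmul'; auto. }
    rewrite (is_derive_unique V x _ DV). split. exact DV.
    destruct (Hclose x Hx) as (Cm & C0 & C1 & C2).
    pose proof (quad be1 be2 (d0 x) (d1 x) (d2 x) (m x) (r0 x) (r1 x) (r2 x) eta Hb1 Hb2 Ha1 Ha2 Hg He Heta0 Heta Cm C0 C1 C2) as Q.
    cbv zeta in Q.
    replace (x * ((e2 * D0 + e1 * D1 + D2) * y0 x + y0 x * (e2 * D0 + e1 * D1 + D2) +
      ((be2 * D1 + D2) * y1 x + y1 x * (be2 * D1 + D2)) + ((be1 * D1 + D2) * y2 x + y2 x * (be1 * D1 + D2))))
     with (2 * (y0 x * (e2 * (x * D0) + e1 * (x * D1) + x * D2) + y1 x * (be2 * (x * D1) + x * D2)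
        + y2 x * (be1 * (x * D1) + x * D2))) by ring.
    rewrite E0, E1, E2. unfold V, y0, y1, y2, e1, e2.
    match goal with |- ?A <= ?B => match type of Q with ?C <= ?D =>
      replace A with C by ring; replace B with D by ring; exact Q end end. }
  assert (HV0 : forall x, 0 < x < delta -> V x = 0).
  { apply (U1 V (Derive V) delta (75 * C ^ 2)).
    - intros; apply HV; auto.
    - intros; apply HV; auto.
    - intros x _. unfold V. nra.
    - intros x Hx. destruct (Hsm x Hx) as (B0 & B1 & B2).
      assert (He1 : Rabs e1 <= 2) by (unfold e1; eapply Rle_trans; [apply Rabs_triang|lra]).
      assert (He2 : Rabs e2 <= 1).
      { unfold e2. rewrite Rabs_mult. replace 1 with (1*1) by ring. apply Rmult_le_compat; auto using Rabs_pos. }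
      assert (HCx : 0 <= C * x) by (eapply Rle_trans; [apply (Rabs_pos (d0 x))|auto]).
      assert (Hz : forall a b : R, Rabs a <= 2 -> Rabs b <= 2 -> Rabs (a * d0 x + b * d1 x + d2 x) <= 5 * (C * x)).
      { intros a b Ha Hb. eapply Rle_trans. apply Rabs_triang. eapply Rle_trans. apply Rplus_le_compat_r. apply Rabs_triang.
        rewrite !Rabs_mult.
        assert (Rabs a * Rabs (d0 x) <= 2 * (C * x)) by (apply Rmult_le_compat; auto using Rabs_pos).
        assert (Rabs b * Rabs (d1 x) <= 2 * (C * x)) by (apply Rmult_le_compat; auto using Rabs_pos).
        lra. }
      assert (Y0 : Rabs (y0 x) <= 5 * (C * x)) by (unfold y0; cbv beta; apply Hz; lra).
      assert (Y1 : Rabs (y1 x) <= 5 * (C * x)).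
      { unfold y1; cbv beta. replace (be2 * d1 x + d2 x) with (0 * d0 x + be2 * d1 x + d2 x) by ring. apply Hz; [rewrite Rabs_R0; lra | lra]. }
      assert (Y2 : Rabs (y2 x) <= 5 * (C * x)).
      { unfold y2; cbv beta. replace (be1 * d1 x + d2 x) with (0 * d0 x + be1 * d1 x + d2 x) by ring. apply Hz; [rewrite Rabs_R0; lra | lra]. }
      assert (Sq : forall z, Rabs z <= 5 * (C * x) -> z * z <= 25 * (C * x) ^ 2).
      { intros z Hz'. 
        assert (z * z = Rabs z * Rabs z) by (rewrite <- Rabs_mult; rewrite Rabs_right; [ring|nra]).
        rewrite H. pose proof (Rabs_pos z). assert (0 <= C * x) by lra. nra. }
      unfold V. pose proof (Sq _ Y0). pose proof (Sq _ Y1). pose proof (Sq _ Y2).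
      assert (75 * C ^ 2 * x ^ 2 = 75 * (C * x) ^ 2) by ring. nra. }
  intros x Hx. specialize (HV0 x Hx). unfold V in HV0.
  assert (Z0 : y0 x = 0) by nra. assert (Z1 : y1 x = 0) by nra. assert (Z2 : y2 x = 0) by nra.
  unfold y0, y1, y2 in *.
  assert (Dd1 : (be2 - be1) * d1 x = 0) by lra.
  assert (be2 - be1 <> 0) by (intro Hz; rewrite Hz, Rabs_R0 in Hg; lra).
  assert (Q1 : d1 x = 0).
  { apply Rmult_integral in Dd1. destruct Dd1; auto. contradiction. }
  assert (Q2 : d2 x = 0) by (rewrite Q1 in Z1; lra).
  assert (e2 <> 0) by (intro Hz; unfold e2 in Hz; rewrite Hz, Rabs_R0 in He; lra).
  rewrite Q1, Q2 in Z0. assert (Z3 : e2 * d0 x = 0) by lra.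
  apply Rmult_integral in Z3. destruct Z3; [contradiction|auto].
Qed.
From Stdlib Require Import Reals Lra.
From Coquelicot Require Import Coquelicot.
Open Scope R_scope.

Definition near0 (P : R -> Prop) := exists delta, 0 < delta /\ forall x, Rabs x < delta -> P x.

Lemma near0_and P Q : near0 P -> near0 Q -> near0 (fun x => P x /\ Q x).
Proof.
  intros [d1 [H1 P1]] [d2 [H2 P2]]. exists (Rmin d1 d2). split. apply Rmin_pos; auto.
  intros x Hx. split. apply P1. eapply Rlt_le_trans; [exact Hx|apply Rmin_l].
  apply P2. eapply Rlt_le_trans; [exact Hx|apply Rmin_r].
Qed.

Lemma near0_impl (P Q : R -> Prop) : (forall x, P x -> Q x) -> near0 P -> near0 Q.
Proof. intros H [d [Hd HP]]. exists d. split; auto. Qed.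

Lemma deriv_lin (f : R -> R) (l : R) : is_derive f 0 l ->
  near0 (fun x => Rabs (f x - f 0) <= (Rabs l + 1) * Rabs x).
Proof.
  intro H. apply is_derive_Reals in H. destruct (H 1 Rlt_0_1) as [d Hd].
  exists d. split. apply cond_pos. intros x Hx.
  destruct (Req_dec x 0) as [->|Hx0].
  { rewrite Rminus_diag, Rabs_R0. pose proof (Rabs_pos l). lra. }
  specialize (Hd x Hx0 Hx). rewrite Rplus_0_l in Hd.
  assert (E : f x - f 0 = ((f x - f 0) / x - l) * x + l * x) by (field; auto).
  rewrite E. eapply Rle_trans. apply Rabs_triang. rewrite !Rabs_mult.
  assert (Rabs ((f x - f 0) / x - l) * Rabs x <= 1 * Rabs x).
  { apply Rmult_le_compat_r. apply Rabs_pos. lra. }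
  lra.
Qed.

Lemma near_close (f : R -> R) (l v eps : R) : is_derive f 0 l -> f 0 = v -> 0 < eps ->
  near0 (fun x => Rabs (f x - v) <= eps).
Proof.
  intros H Hv He. destruct (deriv_lin f l H) as [d [Hd P]].
  exists (Rmin d (eps / (Rabs l + 1))). split.
  { apply Rmin_pos; auto. apply Rdiv_lt_0_compat; auto. pose proof (Rabs_pos l); lra. }
  intros x Hx. rewrite <- Hv. eapply Rle_trans. apply P. eapply Rlt_le_trans; [exact Hx|apply Rmin_l].
  assert (Rabs x <= eps / (Rabs l + 1)) by (left; eapply Rlt_le_trans; [exact Hx|apply Rmin_r]).
  pose proof (Rabs_pos l).
  apply Rle_trans with ((Rabs l + 1) * (eps / (Rabs l + 1))).
  apply Rmult_le_compat_l; lra. right; field; lra.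
Qed.

Lemma near_pos (f : R -> R) (l : R) : is_derive f 0 l -> 0 < f 0 -> near0 (fun x => 0 < f x).
Proof.
  intros H Hp. apply (near0_impl (fun x => Rabs (f x - f 0) <= f 0 / 2)).
  { intros x Hx. pose proof (Rle_abs (f 0 - f x)). rewrite Rabs_minus_sym in Hx. lra. }
  apply (near_close f l); auto. lra.
Qed.

Lemma near_small (f : R -> R) (l : R) : is_derive f 0 l -> f 0 = 0 ->
  exists C, near0 (fun x => Rabs (f x) <= C * Rabs x).
Proof.
  intros H H0. exists (Rabs l + 1). apply (near0_impl (fun x => Rabs (f x - f 0) <= (Rabs l + 1) * Rabs x)).
  intros x Hx. rewrite H0, Rminus_0_r in Hx. auto. apply (deriv_lin f l H).
Qed.

Lemma F1_0 : F1 0 = 1. Proof. unfold F1; ring. Qed.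
Lemma G0_0 : G0 0 = 1. Proof. unfold G0; ring. Qed.
Lemma G1_0 : G1 0 = 1. Proof. unfold G1; ring. Qed.
Lemma Phi_0 : Phi3 0 = 0. Proof. unfold Phi3. rewrite G0_0, G1_0. field. Qed.
Lemma B_0 : peval Bl 0 = 1. Proof. rewrite B_eq, F1_0, G0_0, G1_0. ring. Qed.
Lemma Ln_0 : peval Lnl 0 = 1. Proof. rewrite Ln_eq, F1_0, G0_0, G1_0. ring. Qed.
Lemma mm_0 : mm 0 = 1. Proof. unfold mm. rewrite B_0, Ln_0. field. Qed.
Lemma Ef_0 c0 cF c2 c3 : Ef c0 cF c2 c3 0 = 1.
Proof. unfold Ef. rewrite F1_0, G0_0, G1_0, Rminus_0_r, ln_1. rewrite <- exp_0. f_equal. ring. Qed.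

Lemma good0 : goodx 0.
Proof. unfold goodx. rewrite F1_0, G0_0, G1_0, Ln_0. lra. Qed.

Lemma Phi_der0 : is_derive Phi3 0 (dPhi 0).
Proof. apply Phi_der; rewrite ?G0_0, ?G1_0; lra. Qed.

Lemma mm_der0 : exists l, is_derive mm 0 l.
Proof. eexists. unfold mm. apply ddiv. apply peval_der. apply peval_der. rewrite B_0; lra. Qed.

Lemma rr_der0 (q e : R) : exists l, is_derive (fun x => mm x * (Phi3 x * q - e) / (1 - Phi3 x)) 0 l.
Proof.
  destruct mm_der0 as [lm Hm]. eexists. apply ddiv. apply dmul. exact Hm.
  apply dminus. apply (dmul Phi3 (fun _ => q)). apply Phi_der0. apply dconst. apply dconst.
  apply dminus. apply dconst. apply Phi_der0. rewrite Phi_0; lra.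
Qed.

Lemma dneg (x : R) : is_derive (fun t : R => - t) x (-1).
Proof. apply (dext (fun t => -1 * t)). intro; ring. eapply deq. apply dscal. apply did. ring. Qed.

Lemma coef0 a1 a2 a3 b1 b2 : coef3F2 a1 a2 a3 b1 b2 0 = 1.
Proof. unfold coef3F2; simpl. field. Qed.

Lemma U_at0 a1 a2 a3 b1 b2 : Uf a1 a2 a3 b1 b2 0 0 = 1 /\ Uf a1 a2 a3 b1 b2 1 0 = 0 /\ Uf a1 a2 a3 b1 b2 2 0 = 0.
Proof.
  unfold Uf, Tk. rewrite Phi_0, !PSeries_0. unfold ak. rewrite coef0. simpl. split; [ring|split; ring].
Qed.

Lemma U_der0 a1 a2 a3 b1 b2 k : hypab (Q2R a1) (Q2R a2) (Q2R a3) (Q2R b1) (Q2R b2) ->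
  exists l, is_derive (Uf a1 a2 a3 b1 b2 k) 0 l.
Proof.
  intro Hab. assert (Hz : Rabs (Phi3 0) < 1/16) by (rewrite Phi_0, Rabs_R0; lra).
  destruct (T_deriv _ _ _ _ _ k _ Hab Hz) as [t [Dt _]].
  eexists. unfold Uf. apply (dcomp (Tk _ _ _ _ _ k) Phi3). exact Dt. apply Phi_der0.
Qed.

Lemma scal_pow (a : nat -> R) (z : R) n : scal (pow_n z n) (a n) = z ^ n * a n.
Proof. rewrite pow_n_pow. reflexivity. Qed.

Theorem generic (a1 a2 a3 b1 b2 c0 cF c2 c3 : Q) (P : list Q) :
  hypab (Q2R a1) (Q2R a2) (Q2R a3) (Q2R b1) (Q2R b2) ->
  -3/7 <= Q2R b1 - 1 -> -3/7 <= Q2R b2 - 1 -> Rabs (Q2R b1 - 1) <= 1 -> Rabs (Q2R b2 - 1) <= 1 ->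
  1/7 <= Rabs ((Q2R b2 - 1) - (Q2R b1 - 1)) -> 1/25 <= Rabs ((Q2R b1 - 1) * (Q2R b2 - 1)) ->
  pzero (Zl a1 a2 a3 b1 b2 P (Hl c0 cF c2 c3)) = true -> peval P 0 = 1 ->
  near0 (fun x => is_3F2 (Q2R a1) (Q2R a2) (Q2R a3) (Q2R b1) (Q2R b2) (Phi3 x) (peval P x * Ef c0 cF c2 c3 x)).
Proof.
  intros Hab Hb1 Hb2 Ha1 Ha2 Hg He HZ HP0.
  set (be1 := Q2R b1 - 1) in *. set (be2 := Q2R b2 - 1) in *.
  set (eta := 1/200000).
  set (d0 := fun x => Uf a1 a2 a3 b1 b2 0 x - V1f c0 cF c2 c3 P x).
  set (d1 := fun x => Uf a1 a2 a3 b1 b2 1 x - V2f c0 cF c2 c3 P x).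
  set (d2 := fun x => Uf a1 a2 a3 b1 b2 2 x - V3f c0 cF c2 c3 P x).
  destruct (U_at0 a1 a2 a3 b1 b2) as (U00 & U10 & U20).
  assert (V10 : V1f c0 cF c2 c3 P 0 = 1) by (unfold V1f; rewrite Ef_0, HP0; ring).
  assert (V20 : V2f c0 cF c2 c3 P 0 = 0) by (unfold V2f; rewrite N2_eq, Ln_0; field).
  assert (V30 : V3f c0 cF c2 c3 P 0 = 0) by (unfold V3f; rewrite N3_eq, Ln_0; field).
  destruct (V_rel a1 a2 a3 b1 b2 c0 cF c2 c3 P 0 HZ good0) as (W1 & W2 & W3 & DW1 & DW2 & DW3 & _).
  destruct (U_der0 a1 a2 a3 b1 b2 0 Hab) as [u0 DU0].
  destruct (U_der0 a1 a2 a3 b1 b2 1 Hab) as [u1 DU1].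
  destruct (U_der0 a1 a2 a3 b1 b2 2 Hab) as [u2 DU2].
  destruct (near_small d0 (u0 - W1)) as [C0 N0]. { apply dminus; auto. } { unfold d0; rewrite U00, V10; ring. }
  destruct (near_small d1 (u1 - W2)) as [C1 N1]. { apply dminus; auto. } { unfold d1; rewrite U10, V20; ring. }
  destruct (near_small d2 (u2 - W3)) as [C2 N2]. { apply dminus; auto. } { unfold d2; rewrite U20, V30; ring. }
  assert (Ngood : near0 goodx).
  { unfold goodx. repeat apply near0_and.
    - apply (near_pos (fun x => 1 - x) (0 - 1)). apply dminus. apply dconst. apply did. lra.
    - apply (near_pos F1 _ (F1_der 0)). rewrite F1_0; lra.
    - apply (near_pos G0 _ (G0_der 0)). rewrite G0_0; lra.
    - apply (near_pos G1 _ (G1_der 0)). rewrite G1_0; lra.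
    - apply (near_pos (peval Lnl) _ (peval_der Lnl 0)). rewrite Ln_0; lra. }
  assert (NPhi : near0 (fun x => Rabs (Phi3 x) < 1/16)).
  { apply (near0_impl (fun x => Rabs (Phi3 x - 0) <= 1/32)). intros x Hx. rewrite Rminus_0_r in Hx. lra.
    apply (near_close Phi3 _ 0 (1/32) Phi_der0 Phi_0). lra. }
  assert (Nm : near0 (fun x => Rabs (mm x - 1) <= eta)).
  { destruct mm_der0 as [l Hl']. apply (near_close mm l 1 eta Hl' mm_0). unfold eta; lra. }
  assert (Nr0 : near0 (fun x => Rabs (rr0 a1 a2 a3 b1 b2 x) <= eta)).
  { destruct (rr_der0 (Q2R a1 * Q2R a2 * Q2R a3) 0) as [l Hl'].
    apply (near0_impl (fun x => Rabs (rr0 a1 a2 a3 b1 b2 x - 0) <= eta)). intros x Hx; rewrite Rminus_0_r in Hx; auto.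
    apply (near_close _ l 0 eta).
    - eapply dext; [|exact Hl']. intro y. unfold rr0. f_equal. f_equal. ring.
    - unfold rr0. rewrite Phi_0. field.
    - unfold eta; lra. }
  assert (Nr1 : near0 (fun x => Rabs (rr1 a1 a2 a3 b1 b2 x + be1 * be2) <= eta)).
  { destruct (rr_der0 (Q2R a1 * Q2R a2 + Q2R a1 * Q2R a3 + Q2R a2 * Q2R a3) ((Q2R b1 - 1) * (Q2R b2 - 1))) as [l Hl'].
    apply (near0_impl (fun x => Rabs (rr1 a1 a2 a3 b1 b2 x - - (be1 * be2)) <= eta)).
    { intros x Hx. unfold Rminus in Hx. rewrite Ropp_involutive in Hx. auto. }
    apply (near_close _ l). exact Hl'. unfold rr1. rewrite Phi_0, mm_0. unfold be1, be2. field. unfold eta; lra. }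
  assert (Nr2 : near0 (fun x => Rabs (rr2 a1 a2 a3 b1 b2 x + (be1 + be2)) <= eta)).
  { destruct (rr_der0 (Q2R a1 + Q2R a2 + Q2R a3) (Q2R b1 - 1 + (Q2R b2 - 1))) as [l Hl'].
    apply (near0_impl (fun x => Rabs (rr2 a1 a2 a3 b1 b2 x - - (be1 + be2)) <= eta)).
    { intros x Hx. unfold Rminus in Hx. rewrite Ropp_involutive in Hx. auto. }
    apply (near_close _ l). exact Hl'. unfold rr2. rewrite Phi_0, mm_0. unfold be1, be2. field. unfold eta; lra. }
  destruct (near0_and _ _ Ngood (near0_and _ _ NPhi (near0_and _ _ Nm (near0_and _ _ Nr0 (near0_and _ _ Nr1
     (near0_and _ _ Nr2 (near0_and _ _ N0 (near0_and _ _ N1 N2)))))))) as [delta [Hdelta Hall]].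
  set (C := Rabs C0 + Rabs C1 + Rabs C2).
  assert (HC0 : C0 <= C) by (unfold C; pose proof (Rle_abs C0); pose proof (Rabs_pos C1); pose proof (Rabs_pos C2); lra).
  assert (HC1 : C1 <= C) by (unfold C; pose proof (Rle_abs C1); pose proof (Rabs_pos C0); pose proof (Rabs_pos C2); lra).
  assert (HC2 : C2 <= C) by (unfold C; pose proof (Rle_abs C2); pose proof (Rabs_pos C1); pose proof (Rabs_pos C0); lra).
  assert (Hrel : forall x, Rabs x < delta -> exists D0 D1 D2 : R,
     is_derive d0 x D0 /\ is_derive d1 x D1 /\ is_derive d2 x D2 /\
     x * D0 = mm x * d1 x /\ x * D1 = mm x * d2 x /\
     x * D2 = rr0 a1 a2 a3 b1 b2 x * d0 x + rr1 a1 a2 a3 b1 b2 x * d1 x + rr2 a1 a2 a3 b1 b2 x * d2 x).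
  { intros x Hx. destruct (Hall x Hx) as (Hgx & HPx & _).
    destruct (U_rel a1 a2 a3 b1 b2 x Hab Hgx HPx) as (A0 & A1 & A2 & DA0 & DA1 & DA2 & EA0 & EA1 & EA2).
    destruct (V_rel a1 a2 a3 b1 b2 c0 cF c2 c3 P x HZ Hgx) as (B1 & B2 & B3 & DB1 & DB2 & DB3 & EB1 & EB2 & EB3).
    exists (A0 - B1), (A1 - B2), (A2 - B3). unfold d0, d1, d2.
    split; [apply dminus; auto|]. split; [apply dminus; auto|]. split; [apply dminus; auto|].
    split; [rewrite Rmult_minus_distr_l, EA0, EB1; ring|].
    split; [rewrite Rmult_minus_distr_l, EA1, EB2; ring|].
    rewrite Rmult_minus_distr_l, EA2, EB3; ring. }
  assert (Pos : forall x, 0 < x < delta -> d0 x = 0 /\ d1 x = 0 /\ d2 x = 0).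
  { apply (U3 d0 d1 d2 mm (rr0 a1 a2 a3 b1 b2) (rr1 a1 a2 a3 b1 b2) (rr2 a1 a2 a3 b1 b2) be1 be2 delta C eta);
      auto; try (unfold eta; lra).
    - intros x Hx. apply Hrel. rewrite Rabs_right; lra.
    - intros x Hx. assert (Hx' : Rabs x < delta) by (rewrite Rabs_right; lra).
      destruct (Hall x Hx') as (_ & _ & Hm & H0 & H1 & H2 & _). auto.
    - intros x Hx. assert (Hx' : Rabs x < delta) by (rewrite Rabs_right; lra).
      destruct (Hall x Hx') as (_ & _ & _ & _ & _ & _ & S0 & S1 & S2).
      rewrite (Rabs_right x) in S0, S1, S2 by lra.
      repeat split; [eapply Rle_trans; [exact S0|] | eapply Rle_trans; [exact S1|] | eapply Rle_trans; [exact S2|]];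
      apply Rmult_le_compat_r; lra. }
  assert (Neg : forall t, 0 < t < delta -> d0 (- t) = 0 /\ d1 (- t) = 0 /\ d2 (- t) = 0).
  { apply (U3 (fun t => d0 (- t)) (fun t => d1 (- t)) (fun t => d2 (- t)) (fun t => mm (- t))
      (fun t => rr0 a1 a2 a3 b1 b2 (- t)) (fun t => rr1 a1 a2 a3 b1 b2 (- t)) (fun t => rr2 a1 a2 a3 b1 b2 (- t))
      be1 be2 delta C eta); auto; try (unfold eta; lra).
    - intros t Ht. assert (Hx' : Rabs (- t) < delta) by (rewrite Rabs_Ropp, Rabs_right; lra).
      destruct (Hrel (- t) Hx') as (D0 & D1 & D2 & DD0 & DD1 & DD2 & E0 & E1 & E2).
      exists (-1 * D0), (-1 * D1), (-1 * D2).
      split; [apply (dcomp d0 (fun t => - t)); auto; apply dneg|].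
      split; [apply (dcomp d1 (fun t => - t)); auto; apply dneg|].
      split; [apply (dcomp d2 (fun t => - t)); auto; apply dneg|].
      split; [rewrite <- E0; ring|]. split; [rewrite <- E1; ring|]. rewrite <- E2; ring.
    - intros t Ht. assert (Hx' : Rabs (- t) < delta) by (rewrite Rabs_Ropp, Rabs_right; lra).
      destruct (Hall (- t) Hx') as (_ & _ & Hm & H0 & H1 & H2 & _). auto.
    - intros t Ht. assert (Hx' : Rabs (- t) < delta) by (rewrite Rabs_Ropp, Rabs_right; lra).
      destruct (Hall (- t) Hx') as (_ & _ & _ & _ & _ & _ & S0 & S1 & S2).
      rewrite (Rabs_Ropp t), (Rabs_right t) in S0, S1, S2 by lra.
      repeat split; [eapply Rle_trans; [exact S0|] | eapply Rle_trans; [exact S1|] | eapply Rle_trans; [exact S2|]];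
      apply Rmult_le_compat_r; lra. }
  exists delta. split; auto. intros x Hx.
  assert (Dx : d0 x = 0).
  { destruct (Rtotal_order x 0) as [Hlt|[Heq|Hgt]].
    - replace x with (- (- x)) by ring. apply Neg. split; [lra|]. rewrite Rabs_left in Hx; lra.
    - subst x. unfold d0. rewrite U00, V10. ring.
    - apply Pos. split; auto. rewrite Rabs_right in Hx; lra. }
  destruct (Hall x Hx) as (_ & HPx & _).
  unfold d0 in Dx. unfold Uf, V1f, Tk in Dx.
  assert (EQ : PSeries (ak (Q2R a1) (Q2R a2) (Q2R a3) (Q2R b1) (Q2R b2) 0) (Phi3 x) = peval P x * Ef c0 cF c2 c3 x) by lra.
  unfold is_3F2. apply is_series_Reals.
  pose proof (PSeries_correct _ _ (CV_radius_inside _ _ (lt_rad _ _ _ _ _ 0 _ Hab HPx))) as PC.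
  rewrite EQ in PC. unfold is_pseries in PC.
  eapply is_series_ext; [|exact PC]. intro n. cbv beta. rewrite (scal_pow (ak _ _ _ _ _ 0)). unfold ak. simpl. ring.
Qed.

Lemma near_good : near0 goodx.
Proof.
  unfold goodx. repeat apply near0_and.
  - apply (near_pos (fun x => 1 - x) (0 - 1)). apply dminus. apply dconst. apply did. lra.
  - apply (near_pos F1 _ (F1_der 0)). rewrite F1_0; lra.
  - apply (near_pos G0 _ (G0_der 0)). rewrite G0_0; lra.
  - apply (near_pos G1 _ (G1_der 0)). rewrite G1_0; lra.
  - apply (near_pos (peval Lnl) _ (peval_der Lnl 0)). rewrite Ln_0; lra.
Qed.

Lemma Ef_split c0 cF c2 c3 x : goodx x ->
  Ef c0 cF c2 c3 x = Rpower (1 - x) (Q2R c0) * Rpower (F1 x) (Q2R cF) * Rpower (G0 x) (Q2R c2) * Rpower (G1 x) (Q2R c3).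
Proof. intros _. unfold Ef, Rpower. rewrite !exp_plus. rewrite !(Rmult_comm (Q2R _)). reflexivity. Qed.

Lemma Q2R_lit (n : Z) (d : positive) : Q2R (n # d) = IZR n / IZR (Zpos d).
Proof. reflexivity. Qed.

Ltac rabs := unfold Rabs; repeat (destruct Rcase_abs); lra.

Lemma case1 : near0 (fun x => is_3F2 (-1/14) (11/42) (25/42) (4/7) (5/7) (Phi3 x)
      ((1 - 3*x) * Rpower (1 - x) (3/7) * Rpower (G0 x) (-3/14) * Rpower (G1 x) (-3/14))).
Proof.
  pose proof (generic (-1#14) (11#42) (25#42) (4#7) (5#7) (3#7) 0 (-3#14) (-3#14) [1;-3]%Q) as G.
  rewrite !Q2R_lit in G.
  assert (N : near0 (fun x => is_3F2 (-1 / 14) (11 / 42) (25 / 42) (4 / 7) (5 / 7) (Phi3 x)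
       (peval [1%Q; (-3)%Q] x * Ef (3 # 7) 0 (-3 # 14) (-3 # 14) x))).
  { apply G.
    - unfold hypab. repeat split; rabs.
    - lra. - lra. - rabs. - rabs. - rabs. - rabs.
    - vm_compute. reflexivity.
    - cbn [peval]. rewrite !Q2R_lit. lra. }
  eapply near0_impl; [|exact (near0_and _ _ near_good N)]. cbv beta.
  intros x [Hg H]. rewrite Ef_split in H by auto.
  destruct Hg as (g1 & g2 & g3 & g4 & g5).
  match type of H with is_3F2 ?a ?b ?c ?d ?e ?z ?v =>
    replace v with ((1 - 3*x) * Rpower (1 - x) (3/7) * Rpower (G0 x) (-3/14) * Rpower (G1 x) (-3/14)) in H end.
  exact H.
  rewrite !Q2R_lit. replace (IZR 0 / IZR 1) with 0 by field. rewrite Rpower_O by auto.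
  cbn [peval]. rewrite !Q2R_lit. field.
Qed.

Lemma Rpower_negint (a : R) (n : nat) : 0 < a -> Rpower a (- INR n) = / a ^ n.
Proof. intro H. rewrite Rpower_Ropp, Rpower_pow; auto. Qed.

Lemma case2 : near0 (fun x => is_3F2 (3/14) (23/42) (37/42) (6/7) (9/7) (Phi3 x)
      ((1 - 2*x/3) * Rpower (1 - x) (-2/7) / F1 x ^ 2 * Rpower (G0 x) (9/14) * Rpower (G1 x) (9/14))).
Proof.
  pose proof (generic (3#14) (23#42) (37#42) (6#7) (9#7) (-2#7) (-2) (9#14) (9#14) [1;-2#3]%Q) as G.
  rewrite !Q2R_lit in G.
  assert (N : near0 (fun x => is_3F2 (3/14) (23/42) (37/42) (6/7) (9/7) (Phi3 x)
       (peval [1%Q; (-2#3)%Q] x * Ef (-2#7) (-2) (9#14) (9#14) x))).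
  { apply G.
    - unfold hypab. repeat split; rabs.
    - lra. - lra. - rabs. - rabs. - rabs. - rabs.
    - vm_compute. reflexivity.
    - cbn [peval]. rewrite !Q2R_lit. lra. }
  eapply near0_impl; [|exact (near0_and _ _ near_good N)]. cbv beta.
  intros x [Hg H]. rewrite Ef_split in H by auto.
  destruct Hg as (g1 & g2 & g3 & g4 & g5).
  match type of H with is_3F2 ?a ?b ?c ?d ?e ?z ?v =>
    replace v with ((1 - 2*x/3) * Rpower (1 - x) (-2/7) / F1 x ^ 2 * Rpower (G0 x) (9/14) * Rpower (G1 x) (9/14)) in H end.
  exact H.
  rewrite !Q2R_lit. replace (IZR (-2) / IZR 1) with (- INR 2) by (simpl; field). rewrite Rpower_negint by auto.
  cbn [peval]. rewrite !Q2R_lit. field. lra.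
Qed.

Lemma case3 : near0 (fun x => is_3F2 (5/14) (29/42) (43/42) (8/7) (10/7) (Phi3 x)
      ((1 + x/2) * Rpower (1 - x) (-1/7) / F1 x ^ 3 * Rpower (G0 x) (15/14) * Rpower (G1 x) (15/14))).
Proof.
  pose proof (generic (5#14) (29#42) (43#42) (8#7) (10#7) (-1#7) (-3) (15#14) (15#14) [1;1#2]%Q) as G.
  rewrite !Q2R_lit in G.
  assert (N : near0 (fun x => is_3F2 (5/14) (29/42) (43/42) (8/7) (10/7) (Phi3 x)
       (peval [1%Q; (1#2)%Q] x * Ef (-1#7) (-3) (15#14) (15#14) x))).
  { apply G.
    - unfold hypab. repeat split; rabs.
    - lra. - lra. - rabs. - rabs. - rabs. - rabs.
    - vm_compute. reflexivity.
    - cbn [peval]. rewrite !Q2R_lit. lra. }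
  eapply near0_impl; [|exact (near0_and _ _ near_good N)]. cbv beta.
  intros x [Hg H]. rewrite Ef_split in H by auto.
  destruct Hg as (g1 & g2 & g3 & g4 & g5).
  match type of H with is_3F2 ?a ?b ?c ?d ?e ?z ?v =>
    replace v with ((1 + x/2) * Rpower (1 - x) (-1/7) / F1 x ^ 3 * Rpower (G0 x) (15/14) * Rpower (G1 x) (15/14)) in H end.
  exact H.
  rewrite !Q2R_lit. replace (IZR (-3) / IZR 1) with (- INR 3) by (simpl; field). rewrite Rpower_negint by auto.
  cbn [peval]. rewrite !Q2R_lit. field. lra.
Qed.

Theorem mainTheorem8 :
  exists eps : R, 0 < eps /\
  forall x : R, Rabs x < eps ->
    is_3F2 (-1/14) (11/42) (25/42) (4/7) (5/7) (Phi3 x)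
      ((1 - 3*x) * Rpower (1 - x) (3/7)
         * Rpower (G0 x) (-3/14) * Rpower (G1 x) (-3/14))
    /\
    is_3F2 (3/14) (23/42) (37/42) (6/7) (9/7) (Phi3 x)
      ((1 - 2*x/3) * Rpower (1 - x) (-2/7) / F1 x ^ 2
         * Rpower (G0 x) (9/14) * Rpower (G1 x) (9/14))
    /\
    is_3F2 (5/14) (29/42) (43/42) (8/7) (10/7) (Phi3 x)
      ((1 + x/2) * Rpower (1 - x) (-1/7) / F1 x ^ 3
         * Rpower (G0 x) (15/14) * Rpower (G1 x) (15/14)).
Proof.
  exact (near0_and _ _ case1 (near0_and _ _ case2 case3)).
Qed.
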